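(* For every integer $j\ge 0$, $f^*(3j+1,2)=2j+1$.
   Context: For integers $d\ge 1$, $n\ge 1$, the triangular grid is $T_d(n)=\{(x_1,\dots,x_d)\in\mathbb{Z}_{\ge 0}^d : x_1+\dots+x_d\le n-1\}$. A fractional cover of $T_d(n)$ is an assignment of nonnegative weights $w(H)$ to affine hyperplanes $H$ of $\mathbb{R}^d$ (only finitely many nonzero) such that $\sum_{H\ni p} w(H)\ge 1$ for every $p\in T_d(n)$. $f^*(n,d)$ denotes the minimum of $\sum_H w(H)$ over all fractional covers of $T_d(n)$. For $d=2$, hyperplanes are lines. *)

(* Defs.v *)
From HB Require Import structures.
From mathcomp Require Import all_boot all_order all_algebra.
From mathcomp Require Import reals.
Set Implicit Arguments. Unset Strict Implicit. Unset Printing Implicit Defensive.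
Import Order.TTheory GRing.Theory Num.Theory.
Local Open Scope ring_scope.

Section FracCover.
Variable R : realType.

(* An affine hyperplane of R^d is given by data (a, c) with a != 0:
   H = { x | sum_i a_i x_i = c }. *)
Definition on_hyp (d : nat) (h : 'rV[R]_d * R) (x : 'rV[R]_d) : bool :=
  \sum_(i < d) h.1 0 i * x 0 i == h.2.

Definition grid_pt (d : nat) (p : 'I_d -> nat) : 'rV[R]_d := \row_i (p i)%:R.

Definition in_Tdn (d n : nat) (p : 'I_d -> nat) : bool :=
  (\sum_(i < d) p i <= n - 1)%N.

(* A finitely supported weighting of hyperplanes, as a finite list of
   entries ((a, c), w): hyperplane {a.x = c} (a != 0) with weight w >= 0.
   (Repeated hyperplanes just add their weights.) *)
Definition frac_cover (d n : nat) (s : seq ('rV[R]_d * R * R)) : Prop :=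
  (forall e, e \in s -> e.1.1 != 0 /\ 0 <= e.2) /\
  (forall p : 'I_d -> nat, in_Tdn n p ->
     1 <= \sum_(e <- s | on_hyp e.1 (grid_pt p)) e.2).

Definition cover_weight (d : nat) (s : seq ('rV[R]_d * R * R)) : R :=
  \sum_(e <- s) e.2.

Definition is_fstar (n d : nat) (v : R) : Prop :=
  (exists s, @frac_cover d n s /\ @cover_weight d s = v) /\
  (forall s, @frac_cover d n s -> v <= @cover_weight d s).

End FracCover.

(* Main.v *)
Require Import Defs.
From HB Require Import structures.
From mathcomp Require Import all_boot all_order all_algebra.
From mathcomp Require Import reals.
Local Open Scope ring_scope.
From mathcomp Require Import zify ring lra.
Import Order.TTheory GRing.Theory Num.Theory.

Local Close Scope ring_scope.
Definition dst (a j : nat) := (a - j) + (j - a).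
Definition inH j a b : bool := [&& a + b <= 3*j, a <= 2*j, b <= 2*j & j <= a + b].
Definition rho j a b := maxn (maxn (dst a j) (dst b j)) (dst (3*j - a - b) j).
Definition Wn j a b := if inH j a b then rho j a b else 0.

Ltac wsolve2 := rewrite /Wn /inH /rho /dst; do 2 (case: ifP; [ move/and4P=> [? ? ? ?] | move/negbT; rewrite ?negb_and => ? ]); lia.
Ltac wsolve := rewrite /Wn /inH /rho /dst; case: ifP; [ move/and4P=> [? ? ? ?] | move/negbT; rewrite ?negb_and => ? ]; lia.

Lemma sumQ n s : 2 * \sum_(0 <= k < n) (k + 1 + s) = n * (n + 1 + 2 * s).
Proof.
elim: n => [|n IH]; first by rewrite big_geq.
rewrite big_nat_recr //= mulnDr IH; lia.
Qed.

Lemma row_hi j s : s <= j -> \sum_(0 <= a < (2*j).+1) Wn j a (j + s) = j * j.+1.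
Proof.
move=> hs.
rewrite (@big_cat_nat _ _ _ (j - s)) /=; [|lia|lia].
rewrite (@big_cat_nat _ _ _ j.+1 (j - s)) /=; [|lia|lia].
rewrite (@big_cat_nat _ _ _ (2*j - s).+1 j.+1) /=; [|lia|lia].
have e4 : \sum_((2*j - s).+1 <= a < (2*j).+1) Wn j a (j + s) = 0.
  rewrite big_nat_cond big1 // => a /andP[/andP[h1 h2] _]; wsolve.
have e2 : \sum_(j - s <= a < j.+1) Wn j a (j + s) = (s.+1) * s.
  rewrite (eq_big_nat _ _ (F2 := fun _ => s)); last by move=> a /andP[h1 h2] /=; wsolve.
  rewrite sum_nat_const_nat; congr (_ * _); lia.
have e1 : 2 * \sum_(0 <= a < j - s) Wn j a (j + s) = (j - s) * (j - s + 1 + 2 * s).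
  rewrite -sumQ big_nat_rev /= add0n; congr (2 * _).
  apply: eq_big_nat => a /andP[h1 h2]; wsolve.
have e3 : 2 * \sum_(j.+1 <= a < (2*j - s).+1) Wn j a (j + s) = (j - s) * (j - s + 1 + 2 * s).
  rewrite -sumQ -(add0n j.+1) big_addn; congr (2 * _).
  have -> : (2 * j - s).+1 - j.+1 = j - s by lia.
  apply: eq_big_nat => a /andP[h1 h2]; wsolve.
rewrite e4 e2 addn0.
move: e1 e3; set X := \sum_(0 <= i < j - s) _; set Y := \sum_(j.+1 <= i < _) _.
have [k ->] : exists k, j = s + k by exists (j - s); lia.
have -> : s + k - s = k by lia.
move=> e1 e3; nia.
Qed.

Lemma inH_refl j a t : a <= 2*j -> t <= 2*j -> inH j (2*j - a) (2*j - t) = inH j a t.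
Proof.
move=> ha ht; rewrite /inH; apply/idP/idP => /and4P[? ? ? ?]; apply/and4P; split; lia.
Qed.
Lemma Wn_refl j a t : a <= 2*j -> t <= 2*j -> Wn j (2*j - a) (2*j - t) = Wn j a t.
Proof.
move=> ha ht; rewrite /Wn inH_refl //; case: ifP => // /and4P[h1 h2 h3 h4].
rewrite /rho.
have -> : 3 * j - (2 * j - a) - (2 * j - t) = 2 * j - (3 * j - a - t) by lia.
have e : forall x, x <= 2 * j -> dst (2 * j - x) j = dst x j by move=> x hx; rewrite /dst; lia.
rewrite !e //; lia.
Qed.

Lemma row_sum j t : t <= 2*j -> \sum_(0 <= a < (2*j).+1) Wn j a t = j * j.+1.
Proof.
move=> ht; case: (leqP j t) => hjt.
  have -> : t = j + (t - j) by lia.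
  apply: row_hi; lia.
rewrite big_nat_rev /= add0n -(@row_hi j (j - t)); last by lia.
apply: eq_big_nat => a /andP[h1 h2].
have -> : j + (j - t) = 2 * j - t by lia.
rewrite -Wn_refl; [|lia|lia]. congr Wn; lia.
Qed.

Lemma Wn_sym j a b : Wn j a b = Wn j b a.
Proof.
rewrite /Wn /rho.
have -> : inH j a b = inH j b a.
  by rewrite /inH; apply/idP/idP => /and4P[? ? ? ?]; apply/and4P; split; lia.
have -> : 3 * j - a - b = 3 * j - b - a by lia.
by rewrite (maxnC (dst a j)).
Qed.
Lemma Wn_symc j a b : a + b <= 3 * j -> Wn j a b = Wn j a (3*j - a - b).
Proof.
move=> h; rewrite /Wn /rho.
have -> : inH j a b = inH j a (3 * j - a - b).
  by rewrite /inH; apply/idP/idP => /and4P[? ? ? ?]; apply/and4P; split; lia.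
have -> : 3 * j - a - (3 * j - a - b) = b by lia.
by rewrite -maxnA (maxnC (dst b j)) maxnA.
Qed.
Lemma Wn_le j a b : Wn j a b <= j.
Proof.
rewrite /Wn; case: ifP => // /and4P[h1 h2 h3 h4]; rewrite /rho /dst.
rewrite !geq_max; apply/andP; split; [apply/andP; split|]; lia.
Qed.

Local Open Scope ring_scope.
Lemma intl (u v : int) : u != 0 -> v != 0 -> u + v != 0 -> `|v| <= `|u| -> `|u + v| <= `|u| -> 2 <= `|u|.
Proof. move=> *. lia. Qed.

Lemma core (R : realType) (x y : R) (u v : int) :
  x * u%:~R + y * v%:~R = 0 -> x != 0 -> y != 0 -> x != y -> (u != 0) || (v != 0) ->
  `|x| <= `|y| -> `|x - y| <= `|y| -> 2 <= `|u|.
Proof.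
move=> e hx hy hxy huv h1 h2.
have hu : u != 0.
  apply/negP => /eqP u0; move: e huv; rewrite u0 mulr0 add0r => /eqP.
  by rewrite mulf_eq0 (negbTE hy) /= intr_eq0 => ->.
have hv : v != 0.
  apply/negP => /eqP v0; move: e; rewrite v0 mulr0 addr0 => /eqP.
  by rewrite mulf_eq0 (negbTE hx) /= intr_eq0 (negbTE hu).
have huv' : u + v != 0.
  apply/negP => /eqP s0; have vE : v = - u by apply/eqP; rewrite -addr_eq0 addrC s0.
  move: e; rewrite vE mulrNz mulrN -mulrBl => /eqP; rewrite mulf_eq0 intr_eq0 (negbTE hu) orbF subr_eq0.
  by rewrite (negbTE hxy).
have e1 : `|x| * `|u|%:~R = `|y| * `|v|%:~R.
  rewrite !intr_norm -!normrM; have -> : x * u%:~R = - (y * v%:~R) by apply/eqP; rewrite -addr_eq0 e.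
  by rewrite normrN.
have e2 : `|x - y| * `|u|%:~R = `|y| * `|u + v|%:~R.
  rewrite !intr_norm -!normrM; have -> : (x - y) * u%:~R = - (y * (u + v)%:~R).
    apply/eqP; rewrite -addr_eq0 intrD; apply/eqP; rewrite -e; ring.
  by rewrite normrN.
have ypos : 0 < `|y| by rewrite normr_gt0.
have l1 : `|v| <= `|u|.
  rewrite -(ler_int R) -(ler_pM2l ypos) -e1 ler_pM2r //.
  by rewrite ltr0z normr_gt0.
have l2 : `|u + v| <= `|u|.
  rewrite -(ler_int R) -(ler_pM2l ypos) -e2 ler_pM2r //.
  by rewrite ltr0z normr_gt0.
move: hu hv huv' l1 l2; lia.
Qed.

Lemma on_hypE (R : realType) (h : 'rV[R]_2 * R) (p : 'I_2 -> nat) :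
  on_hyp h (grid_pt R p) = (h.1 0 ord0 * (p ord0)%:R + h.1 0 ord_max * (p ord_max)%:R == h.2).
Proof.
rewrite /on_hyp big_ord_recr big_ord1 /grid_pt !mxE /=.
by have -> : widen_ord (m:=2) (leqnSn 1) ord0 = ord0 by apply: val_inj.
Qed.

Definition ptf (a b : nat) : 'I_2 -> nat := fun i => if val i == 0%N then a else b.

Lemma Wn_out j a b : (3 * j < a + b)%N -> Wn j a b = 0%N.
Proof. move=> h; rewrite /Wn /inH; case: ifP => // /and4P[? ? ? ?]; lia. Qed.
Lemma Wn_outb j a b : (2 * j < b)%N -> Wn j a b = 0%N.
Proof. move=> h; rewrite /Wn /inH; case: ifP => // /and4P[? ? ? ?]; lia. Qed.
Lemma Wn_pos j a b : (0 < Wn j a b)%N -> inH j a b.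
Proof. by rewrite /Wn; case: ifP. Qed.

Lemma row_le j t : (\sum_(0 <= a < (2*j).+1) Wn j a t <= j * j.+1)%N.
Proof.
case: (leqP t (2*j)) => ht; first by rewrite row_sum.
by rewrite big1_seq // => a _; rewrite Wn_outb.
Qed.

Section L.
Variable R : realType.
Variable j : nat.
Hypothesis j0 : (0 < j)%N.
Local Notation N := (2*j).+1.
Local Notation P := ('I_N * 'I_N)%type.
Definition D : R := (j * j.+1)%:R.
Definition w (p : P) : R := (Wn j p.1 p.2)%:R / D.

Lemma D_gt0 : 0 < D.
Proof. by rewrite /D ltr0n muln_gt0 j0. Qed.

Lemma w_ge0 p : 0 <= w p.
Proof. by rewrite /w divr_ge0 // ltW // D_gt0. Qed.

Lemma w_le p : w p <= (j.+1)%:R^-1.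
Proof.
apply: (@le_trans _ _ (j%:R / D)).
  by rewrite /w ler_pM2r ?invr_gt0 ?D_gt0 // ler_nat Wn_le.
by rewrite /D natrM invfM mulrA mulfV ?mul1r // pnatr_eq0 -lt0n.
Qed.

Lemma rowsumR (b : 'I_N) : \sum_(a : 'I_N) w (a, b) = 1.
Proof.
rewrite /w -mulr_suml -natr_sum /=.
rewrite -(big_mkord xpredT (fun a => Wn j a b)) row_sum; last by rewrite -ltnS ltn_ord.
by rewrite mulfV // -/D gt_eqF // D_gt0.
Qed.

Lemma colsumR (a : 'I_N) : \sum_(b : 'I_N) w (a, b) = 1.
Proof.
rewrite -(rowsumR a); apply: eq_bigr => b _; by rewrite /w /= Wn_sym.
Qed.

Lemma sumP (F : P -> R) : \sum_(p : P) F p = \sum_(a : 'I_N) \sum_(b : 'I_N) F (a, b).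
Proof. by rewrite pair_bigA; apply: eq_bigr => -[]. Qed.

Lemma total : \sum_(p : P) w p = N%:R.
Proof.
rewrite sumP exchange_big /= (eq_bigr (fun _ => 1)) => [|b _]; last exact: rowsumR.
by rewrite sumr_const card_ord.
Qed.

Lemma col_line (a1 : 'I_N) : \sum_(p : P) (if p.1 == a1 then w p else 0) = 1.
Proof.
rewrite sumP (bigD1 a1) //= [X in _ + X]big1 ?addr0; last first.
  by move=> a ha; apply: big1 => b _; rewrite (negbTE ha).
under eq_bigr do rewrite eqxx.
exact: colsumR.
Qed.

Lemma row_line (b1 : 'I_N) : \sum_(p : P) (if p.2 == b1 then w p else 0) = 1.
Proof.
rewrite sumP exchange_big (bigD1 b1) //= [X in _ + X]big1 ?addr0; last first.
  by move=> b hb; apply: big1 => a _; rewrite (negbTE hb).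
under eq_bigr do rewrite eqxx.
exact: rowsumR.
Qed.

Lemma diag_line (m : nat) : \sum_(p : P) (if (p.1 + p.2 == m)%N then w p else 0) <= 1.
Proof.
rewrite sumP.
apply: (@le_trans _ _ (\sum_(a : 'I_N) (Wn j a (3 * j - m))%:R / D)).
  apply: ler_sum => a _.
  case: (pickP (fun b : 'I_N => a + b == m)%N) => [b0 hb0 | none]; last first.
    rewrite big1 => [|b _]; last by rewrite none.
    by rewrite divr_ge0 // ltW // D_gt0.
  rewrite (bigD1 b0) //= hb0 [X in _ + X]big1 ?addr0; last first.
    move=> b hb; case: eqP => // hab; exfalso; move/eqP: hb; apply.
    apply: val_inj; move: hb0 => /= /eqP hb0; lia.
  rewrite /w ler_pM2r ?invr_gt0 ?D_gt0 // ler_nat /=.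
  case: (leqP (a + b0) (3 * j)) => hab.
    rewrite Wn_symc //; move/eqP: hb0 => <-; by rewrite subnDA.
  by rewrite Wn_out.
rewrite -mulr_suml -natr_sum ler_pdivrMr ?D_gt0 // mul1r /D ler_nat.
by rewrite -(big_mkord xpredT (fun a => Wn j a (3 * j - m))) row_le.
Qed.


Lemma card_gap (S : {set P}) (k : P -> nat) :
  (forall p, p \in S -> (k p <= 2 * j)%N) ->
  (forall p q, p \in S -> q \in S -> p != q -> (k p + 2 <= k q)%N \/ (k q + 2 <= k p)%N) ->
  (#|S| <= j.+1)%N.
Proof.
move=> hk hg.
have inj : {in S &, injective (fun p => (inord (k p %/ 2) : 'I_j.+1))}.
  move=> p q hp hq /(congr1 val) /=.
  have := hk _ hp; have := hk _ hq => h1 h2.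
  rewrite !inordK; [|lia|lia] => e.
  case: (eqVneq p q) => // /(hg _ _ hp hq); lia.
rewrite -(card_in_imset inj); apply: leq_trans (max_card _) _; by rewrite card_ord.
Qed.

Lemma gen_line (a0 a1 g : R) : a0 != 0 -> a1 != 0 -> a0 != a1 ->
  \sum_(p : P) (if a0 * (p.1 : nat)%:R + a1 * (p.2 : nat)%:R == g then w p else 0) <= 1.
Proof.
move=> ha0 ha1 ha01.
set S := [set p : P | (a0 * (p.1 : nat)%:R + a1 * (p.2 : nat)%:R == g) && (0 < Wn j p.1 p.2)%N].
have -> : \sum_(p : P) (if a0 * (p.1 : nat)%:R + a1 * (p.2 : nat)%:R == g then w p else 0)
   = \sum_(p in S) w p.
  rewrite [RHS]big_mkcond /=; apply: eq_bigr => p _; rewrite inE.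
  case: (_ == g) => //=; case: ifP => // /negbT; rewrite -leqNgt leqn0 => /eqP h0.
  by rewrite /w h0 mul0r.
apply: (@le_trans _ _ (\sum_(p in S) (j.+1)%:R^-1)).
  by apply: ler_sum => p _; exact: w_le.
have hc : (#|S| <= j.+1)%N.
  have hH : forall p, p \in S -> inH j p.1 p.2.
    by move=> p; rewrite inE => /andP[_ /Wn_pos].
  have rel : forall p q, p \in S -> q \in S ->
      a0 * ((p.1 : nat)%:Z - (q.1 : nat)%:Z)%:~R + a1 * ((p.2 : nat)%:Z - (q.2 : nat)%:Z)%:~R = 0.
    move=> p q; rewrite !inE => /andP[/eqP hp _] /andP[/eqP hq _].
    rewrite !intrB.
    have -> : forall n : nat, (n%:Z)%:~R = n%:R :> R by [].
    rewrite !mulrBr addrACA hp -hq; ring.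
  have nz : forall p q, p \in S -> q \in S -> p != q ->
      ((p.1 : nat)%:Z - (q.1 : nat)%:Z != 0) || ((p.2 : nat)%:Z - (q.2 : nat)%:Z != 0).
    move=> [p1 p2] [q1 q2] _ _ /= hpq; rewrite -negb_and; apply: contra hpq => /andP[/eqP e1 /eqP e2].
    have -> : p1 = q1 by apply: ord_inj; lia.
    have -> : p2 = q2 by apply: ord_inj; lia.
    by [].
  have cases : (`|a0| <= `|a1| /\ `|a0 - a1| <= `|a1|) \/
               (`|a1| <= `|a0| /\ `|a1 - a0| <= `|a0|) \/
               (`|a0| <= `|a0 - a1| /\ `|a1| <= `|a0 - a1|).
    rewrite (distrC a1 a0).
    case: (lerP `|a0| `|a1|) => hxy.
      case: (lerP `|a0 - a1| `|a1|) => hzy; first by left.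
      by right; right; split; [exact: le_trans hxy (ltW hzy) | exact: ltW hzy].
    case: (lerP `|a0 - a1| `|a0|) => hzx.
      by right; left; split; [exact: ltW hxy | done].
    by right; right; split; [exact: ltW hzx | exact: ltW (lt_trans hxy hzx)].
  case: cases => [[hA1 hA2] | [[hB1 hB2] | [hC1 hC2]]].
  - apply: (@card_gap S (fun p => (p.1 : nat))) => [p _ | p q hp hq hpq] /=.
      by rewrite -ltnS; exact: ltn_ord.
    have := @core R _ _ _ _ (rel p q hp hq) ha0 ha1 ha01 (nz p q hp hq hpq) hA1 hA2; case: p {hp hpq} => p1 p2; case: q {hq} => q1 q2 /=; lia.
  - apply: (@card_gap S (fun p => (p.2 : nat))) => [p _ | p q hp hq hpq] /=.
      by rewrite -ltnS; exact: ltn_ord.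
    have e : a1 * ((p.2 : nat)%:Z - (q.2 : nat)%:Z)%:~R + a0 * ((p.1 : nat)%:Z - (q.1 : nat)%:Z)%:~R = 0.
      by rewrite addrC; exact: rel.
    have h2 : ((p.2 : nat)%:Z - (q.2 : nat)%:Z != 0) || ((p.1 : nat)%:Z - (q.1 : nat)%:Z != 0).
      by rewrite orbC; exact: nz.
    have := @core R _ _ _ _ e ha1 ha0 (ltac:(by rewrite eq_sym)) h2 hB1 hB2; case: p {hp hpq e h2} => p1 p2; case: q {hq} => q1 q2 /=; lia.
  - apply: (@card_gap S (fun p => (3 * j - p.1 - p.2)%N)) => [p hp | p q hp hq hpq] /=.
      by move: (hH p hp); case: p {hp} => p1 p2 /= /and4P[? ? ? ?]; lia.
    move: (hH p hp) (hH q hq) (rel p q hp hq) (nz p q hp hq hpq).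
    case: p {hp hpq} => p1 p2; case: q {hq} => q1 q2 /=.
    move=> /and4P[? ? ? ?] /and4P[? ? ? ?] relpq nzpq.
    set u := ((p1 : nat)%:Z - (q1 : nat)%:Z) in relpq nzpq *.
    set v := ((p2 : nat)%:Z - (q2 : nat)%:Z) in relpq nzpq *.
    have e : - a0 * (- (u + v))%:~R + (a1 - a0) * v%:~R = 0.
      by apply: etrans relpq; rewrite intrN intrD; ring.
    have h1 : - a0 != 0 by rewrite oppr_eq0.
    have h2 : a1 - a0 != 0 by rewrite subr_eq0 eq_sym.
    have h3 : - a0 != a1 - a0.
      by apply/negP => /eqP h; move/eqP: ha1; apply; lra.
    have h4 : (- (u + v) != 0) || (v != 0).
      by move: nzpq; rewrite /u /v; lia.
    have h5 : `|- a0| <= `|a1 - a0| by rewrite normrN distrC.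
    have h6 : `|- a0 - (a1 - a0)| <= `|a1 - a0|.
      have -> : - a0 - (a1 - a0) = - a1 by ring.
      by rewrite normrN distrC.
    have := @core R _ _ _ _ e h1 h2 h3 h4 h5 h6; rewrite /u /v; lia.
rewrite sumr_const -[_ *+ #|S|]mulr_natr mulrC ler_pdivrMr ?ltr0n // mul1r ler_nat. exact: hc.
Qed.
End L.

Lemma row_nz {R : realType} (v : 'rV[R]_2) : v != 0 -> (v 0 ord0 != 0) || (v 0 ord_max != 0).
Proof.
move=> hv; apply/negPn/negP; rewrite negb_or !negbK => /andP[/eqP h0 /eqP h1].
move/eqP: hv; apply; apply/matrixP => i k; rewrite !mxE.
have -> : i = 0 by apply: ord_inj; case: i => [[|]].
case: k => [[|[|k]]] hk //.
  by have -> : Ordinal hk = ord0 by apply: ord_inj.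
by have -> : Ordinal hk = ord_max by apply: ord_inj.
Qed.

Section Low.
Variable R : realType.
Variable j : nat.
Hypothesis j0 : (0 < j)%N.
Local Notation N := (2*j).+1.
Local Notation P := ('I_N * 'I_N)%type.

Lemma line_le (h : 'rV[R]_2 * R) : h.1 != 0 ->
  \sum_(p : P) (if on_hyp h (grid_pt R (ptf p.1 p.2)) then w R j p else 0) <= 1.
Proof.
move=> hnz; under eq_bigr do rewrite on_hypE /ptf /=.
set a0 := h.1 0 ord0; set a1 := h.1 0 ord_max; set g := h.2.
case: (pickP (fun p : P => a0 * (p.1 : nat)%:R + a1 * (p.2 : nat)%:R == g)) => [p1 hp1 | none]; last first.
  by rewrite big1 // => p _; rewrite none.
move/eqP: hp1 => /= hp1.
have hnz' := @row_nz R h.1 hnz; rewrite -/a0 -/a1 in hnz'.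
case: (eqVneq a1 0) => ha1.
  rewrite ha1 eqxx orbF in hnz'.
  rewrite -[X in _ <= X](@col_line R j j0 p1.1); apply: ler_sum => p _;
  rewrite -hp1 ha1 !mul0r !addr0 (inj_eq (mulfI hnz')) eqr_nat val_eqE; exact: lexx.
case: (eqVneq a0 0) => ha0.
  rewrite -[X in _ <= X](@row_line R j j0 p1.2); apply: ler_sum => p _;
  rewrite -hp1 ha0 !mul0r !add0r (inj_eq (mulfI ha1)) eqr_nat val_eqE; exact: lexx.
case: (eqVneq a0 a1) => ha01.
  apply: le_trans (@diag_line R j j0 (p1.1 + p1.2)); apply: ler_sum => p _.
  by rewrite -hp1 -ha01 -!mulrDr (inj_eq (mulfI ha0)) -!natrD eqr_nat.
exact: gen_line.
Qed.

Lemma lower (s : seq ('rV[R]_2 * R * R)) : frac_cover (3 * j + 1) s -> N%:R <= cover_weight s.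
Proof.
case=> hs hcov; rewrite -(@total R j j0) /cover_weight.
have step1 : forall p : P,
    w R j p <= w R j p * \sum_(e <- s | on_hyp e.1 (grid_pt R (ptf p.1 p.2))) e.2.
  move=> p; case: (posnP (Wn j p.1 p.2)) => hw.
    by rewrite /w hw !mul0r.
  apply: ler_peMr; first exact: w_ge0.
  apply: hcov; rewrite /in_Tdn big_ord_recr big_ord1 /ptf /=.
  move: (@Wn_pos j _ _ hw) => /and4P[? ? ? ?]; lia.
apply: (@le_trans _ _ (\sum_(p : P) w R j p * \sum_(e <- s | on_hyp e.1 (grid_pt R (ptf p.1 p.2))) e.2)).
  by apply: ler_sum => p _; exact: step1.
under eq_bigr do rewrite big_mkcond mulr_sumr.
rewrite exchange_big /= big_seq [X in _ <= X]big_seq; apply: ler_sum => e he.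
have [hnz he2] := hs e he.
apply: (@le_trans _ _ (e.2 * \sum_(p : P) (if on_hyp e.1 (grid_pt R (ptf p.1 p.2)) then w R j p else 0))).
  rewrite mulr_sumr; apply: ler_sum => p _; case: ifP => _; [by rewrite mulrC | by rewrite !mulr0].
by apply: ler_piMr => //; apply: line_le.
Qed.
End Low.

Lemma sum_pick (R : realType) (F : nat -> R) (r : seq nat) k : uniq r ->
  \sum_(t <- r | t == k) F t = if k \in r then F k else 0.
Proof.
elim: r => [|x r IH] /=; first by rewrite big_nil.
case/andP=> hx hu; rewrite big_cons IH // in_cons.
case: (eqVneq x k) => [e|hxk] /=.
  by subst k; rewrite (negbTE hx) addr0.
by [].
Qed.

Lemma sum_pick' (R : realType) (F : nat -> R) (r : seq nat) (P : pred nat) k : uniq r ->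
  (forall t, t \in r -> P t = (t == k)) ->
  \sum_(t <- r | P t) F t = if k \in r then F k else 0.
Proof.
move=> hu hP; rewrite big_seq_cond (eq_bigl (fun t => (t \in r) && (t == k))).
  by rewrite -(big_seq_cond (fun t => t == k)) sum_pick.
by move=> t /=; case ht: (t \in r) => //=; rewrite hP.
Qed.

Section Up.
Variable R : realType.

Definition ea : 'rV[R]_2 := \row_(i < 2) (if val i == 0%N then 1 else 0).
Definition eb : 'rV[R]_2 := \row_(i < 2) (if val i == 0%N then 0 else 1).
Definition ec : 'rV[R]_2 := \row_(i < 2) 1.

Lemma ea_nz : ea != 0.
Proof. by apply/negP => /eqP /matrixP /(_ 0 ord0); rewrite !mxE /= => /eqP; rewrite oner_eq0. Qed.
Lemma eb_nz : eb != 0.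
Proof. by apply/negP => /eqP /matrixP /(_ 0 ord_max); rewrite !mxE /= => /eqP; rewrite oner_eq0. Qed.
Lemma ec_nz : ec != 0.
Proof. by apply/negP => /eqP /matrixP /(_ 0 ord0); rewrite !mxE /= => /eqP; rewrite oner_eq0. Qed.

Variable j : nat.
Hypothesis j0 : (0 < j)%N.

Definition fw (t : nat) : R := (2 * j - t)%:R / (3 * j)%:R.

Definition scov : seq ('rV[R]_2 * R * R) :=
  [seq ((ea, t%:R), fw t) | t <- iota 0 (2 * j)] ++
  [seq ((eb, t%:R), fw t) | t <- iota 0 (2 * j)] ++
  [seq ((ec, (3 * j - t)%:R), fw t) | t <- iota 0 (2 * j)].

Lemma D3 : 0 < (3 * j)%:R :> R.
Proof. by rewrite ltr0n; lia. Qed.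

Lemma fw_ge0 t : 0 <= fw t.
Proof. by rewrite /fw divr_ge0. Qed.

Lemma part_ge k : ((2 * j)%:R - k%:R) / (3 * j)%:R <= (if k \in iota 0 (2 * j) then fw k else 0).
Proof.
rewrite mem_iota add0n /=; case: ifP => hk.
  by rewrite /fw natrB //; exact: ltnW.
apply: mulr_le0_ge0; last by rewrite invr_ge0 ltW // D3.
by rewrite subr_le0 ler_nat; lia.
Qed.

Lemma cover_ok : frac_cover (3 * j + 1) scov.
Proof.
split.
  move=> e; rewrite !mem_cat => /or3P[] /mapP[t _ ->] /=; split; rewrite ?fw_ge0 //.
  - exact: ea_nz.
  - exact: eb_nz.
  - exact: ec_nz.
move=> p; rewrite /in_Tdn big_ord_recr big_ord1 /=.
have -> : widen_ord (m:=2) (leqnSn 1) ord0 = ord0 by apply: val_inj.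
move=> hp.
set a := p ord0 in hp *; set b := p ord_max in hp *.
rewrite /scov !big_cat !big_map /=.
under eq_bigl do rewrite on_hypE /ea !mxE /= mul1r mul0r addr0 eqr_nat -/a eq_sym.
under [X in _ + (X + _)]eq_bigl do rewrite on_hypE /eb !mxE /= mul1r mul0r add0r eqr_nat -/b eq_sym.
under [X in _ + (_ + X)]eq_bigl do rewrite on_hypE /ec !mxE /= !mul1r -natrD eqr_nat -/a -/b.
rewrite [X in _ + (_ + X)](@sum_pick' _ _ _ _ (3 * j - (a + b))%N); last first.
- move=> t; rewrite mem_iota add0n => /andP[_ ht].
  by apply/eqP/eqP; lia.
- exact: iota_uniq.
rewrite !sum_pick ?iota_uniq //.
apply: (@le_trans _ _ (((2 * j)%:R - a%:R) / (3 * j)%:R + (((2 * j)%:R - b%:R) / (3 * j)%:R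
   + ((2 * j)%:R - (3 * j - (a + b))%:R) / (3 * j)%:R))); last first.
  by apply: lerD; [|apply: lerD]; apply: part_ge.
rewrite -!mulrDl natrB; last by lia.
rewrite natrD (natrM _ 3 j) (natrM _ 2 j).
have h3 : (3%:R * j%:R : R) != 0 by rewrite -natrM pnatr_eq0; lia.
rewrite ler_pdivlMr ?mul1r; last by rewrite -natrM D3.
have -> : 2 * j%:R - a%:R + (2 * j%:R - b%:R + (2 * j%:R - (3 * j%:R - (a%:R + b%:R)))) = 3 * j%:R :> R by ring.
by [].
Qed.

Lemma sum_lin m : (2 * \sum_(t <- iota 0 m) (m - t) = m * (m + 1))%N.
Proof.
have -> : iota 0 m = index_iota 0 m by rewrite /index_iota subn0.
rewrite big_nat_rev /= (eq_big_nat _ _ (F2 := fun t => t + 1 + 0)%N) => [|t /andP[_ ht]]; last by lia.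
by rewrite sumQ; lia.
Qed.

Lemma weight_ok : cover_weight scov = (2 * j + 1)%:R.
Proof.
rewrite /cover_weight /scov !big_cat !big_map /=.
have hs : \sum_(t <- iota 0 (2 * j)) fw t = (j * (2 * j + 1))%:R / (3 * j)%:R.
  rewrite /fw -mulr_suml -natr_sum; congr (_%:R / _).
  have := sum_lin (2 * j); lia.
rewrite hs natrM (natrM _ 3 j).
have hj : (j%:R : R) != 0 by rewrite pnatr_eq0; lia.
by field.
Qed.

Lemma fstar_pos : is_fstar (R:=R) (3 * j + 1) 2 ((2 * j + 1)%:R).
Proof.
split; first by exists scov; split; [exact: cover_ok | exact: weight_ok].
move=> s hs; have := @lower R j j0 s hs; by rewrite addn1.
Qed.
End Up.

Lemma fstar0 (R : realType) : is_fstar (R:=R) (3 * 0 + 1) 2 ((2 * 0 + 1)%:R).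
Proof.
split.
  exists [:: ((ea R, 0), 1)]; split; last by rewrite /cover_weight big_seq1.
  split.
    by move=> e; rewrite inE => /eqP -> /=; split; [exact: ea_nz | exact: ler01].
  move=> p; rewrite /in_Tdn big_ord_recr big_ord1 /= => hp.
  rewrite big_cons big_nil on_hypE /ea !mxE /= mul1r mul0r addr0.
  have -> : p ord0 = 0%N.
    move: hp; have -> : widen_ord (m:=2) (leqnSn 1) ord0 = ord0 by apply: val_inj.
    lia.
  by rewrite eqxx addr0.
move=> s [hs hcov].
have h1 := hcov (fun _ => 0%N) (ltac:(by rewrite /in_Tdn big1)).
apply: le_trans h1 _.
rewrite /cover_weight big_mkcond big_seq [X in _ <= X]big_seq; apply: ler_sum => e he.
by case: ifP => // _; have [_ ->] := hs e he.
Qed.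


Theorem mainTheorem1 (R : realType) (j : nat) :
  is_fstar (3 * j + 1)%N 2 ((2 * j + 1)%N%:R : R).
Proof.
case: j => [|j]; first exact: fstar0.
exact: (@fstar_pos R j.+1 (ltn0Sn j)).
Qed.
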